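(* Let $A\in\mathcal{C}_n$ and $i,j\in\{1,\dots,n\}$. Then $A$ is irreducible with respect to $E_{ij}$ if and only if there exists a minimal zero $u$ of $A$ such that $(Au)_i=(Au)_j=0$ and $u_i+u_j>0$.
   Context: $\mathcal{C}_n$ denotes the cone of copositive matrices: real symmetric $n\times n$ matrices $A$ with $x^TAx\ge 0$ for all $x\in\mathbb{R}^n_+$. $E_{ij}$ is the $n\times n$ matrix with entries 1 at positions $(i,j)$ and $(j,i)$ and 0 elsewhere. For $\mathcal{M}\subset\mathcal{C}_n$ (or a single matrix $M$), $A$ is irreducible with respect to $\mathcal{M}$ if there do not exist $\gamma>0$ and $M\in\mathcal{M}\setminus\{0\}$ with $A-\gamma M\in\mathcal{C}_n$. A zero of $A$ is a nonzero $u\in\mathbb{R}^n_+$ with $u^TAu=0$; $\operatorname{Supp}(u)=\{i:u_i\ne0\}$; a zero $u$ is minimal if there is no zero $v$ with $\operatorname{Supp}(v)\subsetneq\operatorname{Supp}(u)$. *)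

(* Defs.v *)
From HB Require Import structures.
From mathcomp Require Import all_boot all_order all_algebra.
Set Implicit Arguments. Unset Strict Implicit. Unset Printing Implicit Defensive.
Import Order.TTheory GRing.Theory Num.Theory.
Local Open Scope ring_scope.

Definition nonneg_vec (R : realFieldType) (n : nat) (x : 'cV[R]_n) : Prop :=
  forall k, 0 <= x k 0.

Definition qform (R : realFieldType) (n : nat) (A : 'M[R]_n) (x : 'cV[R]_n) : R :=
  (x^T *m A *m x) 0 0.

Definition copositive (R : realFieldType) (n : nat) (A : 'M[R]_n) : Prop :=
  A^T = A /\ forall x : 'cV[R]_n, nonneg_vec x -> 0 <= qform A x.

Definition Eij (R : realFieldType) (n : nat) (i j : 'I_n) : 'M[R]_n :=
  \matrix_(k, l) (((k == i) && (l == j)) || ((k == j) && (l == i)))%:R.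

Definition irreducible_wrt (R : realFieldType) (n : nat) (A M : 'M[R]_n) : Prop :=
  ~ exists gamma : R, 0 < gamma /\ copositive (A - gamma *: M).

Definition supp (R : realFieldType) (n : nat) (u : 'cV[R]_n) : {set 'I_n} :=
  [set k | u k 0 != 0].

Definition is_zero_of (R : realFieldType) (n : nat) (A : 'M[R]_n) (u : 'cV[R]_n) : Prop :=
  u != 0 /\ nonneg_vec u /\ qform A u = 0.

Definition is_minimal_zero (R : realFieldType) (n : nat) (A : 'M[R]_n) (u : 'cV[R]_n) : Prop :=
  is_zero_of A u /\ ~ exists v : 'cV[R]_n, is_zero_of A v /\ supp v \proper supp u.

(* Main.v *)
Require Import Defs.
From HB Require Import structures.
From mathcomp Require Import all_boot all_order all_algebra.
From mathcomp Require Import ring lra zify.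
From Stdlib Require Import Classical.
Import Order.TTheory GRing.Theory Num.Theory.
Local Open Scope ring_scope.

Section Poly.
Variable R : realFieldType.
Implicit Types (p q : {poly R}).

Definition vanish p l := forall a, (a < l)%N -> p`_a = 0.

Lemma factorX p l : vanish p l -> p = drop_poly l p * 'X^l.
Proof.
move=> h; rewrite -{1}(poly_take_drop l p).
have -> : take_poly l p = 0.
  apply/polyP => i; rewrite coef_take_poly coef0; case: ifP => // /h //.
by rewrite add0r.
Qed.

Arguments factorX {p l}.

Lemma prod_low p q l1 l2 : vanish p l1 -> vanish q l2 ->
  vanish (p * q) (l1 + l2) /\ (p * q)`_(l1 + l2) = p`_l1 * q`_l2.
Proof.
move=> hp hq.
have e : p * q = (drop_poly l1 p * drop_poly l2 q) * 'X^(l1 + l2).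
  by rewrite {1}(factorX hp) {1}(factorX hq) exprD; ring.
split.
  by move=> c hc; rewrite e coefMXn hc.
by rewrite e coefMXn ltnn subnn coef0M !coef_drop_poly !add0n.
Qed.

Arguments prod_low {p q l1 l2}.

Lemma horner_bound p g : 0 <= g -> g <= 1 -> `|p.[g]| <= \sum_(i < size p) `|p`_i|.
Proof.
move=> h0 h1; rewrite horner_coef; apply: le_trans (ler_norm_sum _ _ _) _.
apply: ler_sum => i _; rewrite normrM normrX (ger0_norm h0).
by apply: ler_piMr; [exact: normr_ge0 | exact: exprn_ile1].
Qed.

Lemma neg_near0 q : q`_0 < 0 -> exists2 d, 0 < d & forall g, 0 < g -> g < d -> q.[g] < 0.
Proof.
move=> hq.
set r := drop_poly 1 q.
have hqe : forall g, q.[g] = q`_0 + r.[g] * g.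
  move=> g; rewrite -{1}(poly_take_drop 1 q) hornerD expr1 hornerMX.
  have -> : take_poly 1 q = (q`_0)%:P.
    by apply/polyP => i; rewrite coef_take_poly coefC; case: i.
  by rewrite hornerC.
set M := \sum_(i < size r) `|r`_i|.
have hM : 0 <= M by apply: sumr_ge0 => i _; exact: normr_ge0.
exists (Num.min 1 (- q`_0 / (M + 1))).
  by rewrite lt_min ltr01 /= divr_gt0 // ?oppr_gt0 // ltr_pwDr.
move=> g hg; rewrite lt_min => /andP [hg1 hg2].
have hb := horner_bound r g (ltW hg) (ltW hg1).
have hb2 : r.[g] * g <= M * g.
  apply: ler_wpM2r; first exact: ltW.
  by apply: le_trans (ler_norm _) hb.
have hg3 : g * (M + 1) < - q`_0 by rewrite -ltr_pdivlMr // ltr_pwDr.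
rewrite hqe; nra.
Qed.

Arguments neg_near0 {q}.

Lemma sign_low p m (G : R -> Prop) :
  (forall d, 0 < d -> exists g, [/\ 0 < g, g < d & G g]) ->
  (forall g, G g -> 0 <= p.[g]) -> vanish p m -> 0 <= p`_m.
Proof.
move=> hs hG hv; rewrite leNgt; apply/negP => hm.
set q := drop_poly m p.
have hq0 : q`_0 < 0 by rewrite coef_drop_poly add0n.
have [d hd hneg] := neg_near0 hq0.
have [g [hg hgd hGg]] := hs d hd.
have := hG g hGg; rewrite (factorX hv) hornerM hornerXn -/q.
rewrite leNgt => /negP; apply.
by rewrite pmulr_llt0 ?exprn_gt0 // hneg.
Qed.

Arguments sign_low {p m G}.

Lemma coef_main (I : finType) (pk : I -> {poly R}) (D2 gq : {poly R}) (G : R -> Prop) :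
  (forall d, 0 < d -> exists g, [/\ 0 < g, g < d & G g]) ->
  (forall g k, G g -> 0 <= (pk k).[g]) ->
  (forall g, G g -> 0 <= D2.[g]) ->
  (forall g, G g -> 0 < (\sum_k pk k).[g]) ->
  (forall g, G g -> 0 <= ('X * gq - D2 * \sum_k pk k).[g]) ->
  (forall m, (forall k, vanish (pk k) m) -> vanish gq (m + m)) ->
  exists m, [/\ forall k, vanish (pk k) m, forall k, 0 <= (pk k)`_m,
            0 < (\sum_k pk k)`_m & forall l, (l <= m)%N -> D2`_l = 0].
Proof.
move=> hs hpk hD hQ hR hgq.
set Q := \sum_k pk k.
have [g0 [hg0 _ hG0]] := hs 1 ltr01.
have hex : exists m, Q`_m != 0.
  case: (classic (exists m, Q`_m != 0)) => // h; exfalso.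
  have hQ0 : Q = 0.
    apply/polyP => m; rewrite coef0.
    by case: (eqVneq Q`_m 0) => // hne; exfalso; apply: h; exists m.
  by have := hQ g0 hG0; rewrite -/Q hQ0 horner0 ltxx.
case: (ex_minnP hex) => m hm hmin.
have hQlow : vanish Q m.
  move=> l hl; case: (eqVneq Q`_l 0) => // hne.
  by have := hmin l hne; rewrite leqNgt hl.
have hlow : forall l, (l < m)%N -> forall k, (pk k)`_l = 0.
  elim/ltn_ind => l IH hl.
  have hv : forall k, vanish (pk k) l.
    by move=> k a ha; apply: IH => //; apply: ltn_trans hl.
  have hge : forall k, 0 <= (pk k)`_l.
    by move=> k; apply: (sign_low hs) => // g hg; exact: hpk.
  have := hQlow l hl; rewrite /Q coef_sum => /eqP; rewrite psumr_eq0; last first.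
    by move=> k _; exact: hge.
  by move=> /allP h k; apply/eqP; exact: h (mem_index_enum k).
have hv : forall k, vanish (pk k) m by move=> k a ha; exact: hlow.
have hge : forall k, 0 <= (pk k)`_m.
  by move=> k; apply: (sign_low hs) => // g hg; exact: hpk.
have hQm : 0 < Q`_m.
  rewrite lt0r hm /Q coef_sum; apply: sumr_ge0 => k _; exact: hge.
exists m; split => //.
have hglow := hgq m hv.
elim/ltn_ind => l IH hl.
have hvD : vanish D2 l by move=> a ha; apply: IH => //; apply: ltnW; apply: leq_trans ha hl.
have hD0 : 0 <= D2`_l by apply: (sign_low hs).
case: (eqVneq D2`_l 0) => // hne; exfalso.
have [hv2 hc2] := prod_low hvD hQlow.
have hXg : forall c, (c <= l + m)%N -> ('X * gq)`_c = 0.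
  move=> c hc; rewrite coefXM; case: eqP => // hc0.
  apply: hglow; move/eqP: hc0 => hc0; lia.
have hvR : vanish ('X * gq - D2 * Q) (l + m).
  move=> c hc; rewrite coefB hXg; last by apply: ltnW.
  by rewrite hv2 // subr0.
have := sign_low hs (hR) hvR.
rewrite coefB hXg // hc2 sub0r oppr_ge0 => h.
have hDp : 0 < D2`_l by rewrite lt0r hne.
by move: h; rewrite leNgt pmulr_rgt0 // hQm.
Qed.

End Poly.

Arguments vanish {R}.
Arguments factorX {R p l}.
Arguments prod_low {R p q l1 l2}.
Arguments neg_near0 {R q}.
Arguments sign_low {R p m G}.

Section Basics.
Variable R : realFieldType.
Variable n : nat.
Implicit Types (A B : 'M[R]_n) (x y z u v w : 'cV[R]_n).

Definition bil A x y := \sum_k x k 0 * (A *m y) k 0.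

Lemma qformE A x : qform A x = bil A x x.
Proof. by rewrite /qform /bil -mulmxA mxE; apply: eq_bigr => k _; rewrite mxE. Qed.

Lemma bilC A x y : A^T = A -> bil A x y = bil A y x.
Proof.
move=> hA; rewrite /bil.
under eq_bigr do rewrite mxE big_distrr /=.
under [RHS]eq_bigr do rewrite mxE big_distrr /=.
rewrite exchange_big /=; apply: eq_bigr => k _; apply: eq_bigr => l _.
have -> : A l k = A k l by rewrite -{1}hA mxE.
ring.
Qed.

Lemma bilDl A x y z : bil A (x + y) z = bil A x z + bil A y z.
Proof. by rewrite /bil -big_split; apply: eq_bigr => k _; rewrite mxE mulrDl. Qed.

Lemma bilDr A x y z : bil A x (y + z) = bil A x y + bil A x z.
Proof. by rewrite /bil -big_split; apply: eq_bigr => k _; rewrite mulmxDr mxE mulrDr. Qed.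

Lemma bilZl A a x y : bil A (a *: x) y = a * bil A x y.
Proof. by rewrite /bil mulr_sumr; apply: eq_bigr => k _; rewrite mxE mulrA. Qed.

Lemma bilZr A a x y : bil A x (a *: y) = a * bil A x y.
Proof.
rewrite /bil mulr_sumr; apply: eq_bigr => k _.
by rewrite -scalemxAr mxE mulrCA.
Qed.

Lemma bilNl A x y : bil A (- x) y = - bil A x y.
Proof. by rewrite /bil -sumrN; apply: eq_bigr => k _; rewrite mxE mulNr. Qed.

Lemma bilNr A x y : bil A x (- y) = - bil A x y.
Proof. by rewrite /bil -sumrN; apply: eq_bigr => k _; rewrite mulmxN mxE mulrN. Qed.

Lemma bilBl A x y z : bil A (x - y) z = bil A x z - bil A y z.
Proof. by rewrite bilDl bilNl. Qed.

Lemma bilBr A x y z : bil A x (y - z) = bil A x y - bil A x z.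
Proof. by rewrite bilDr bilNr. Qed.

Lemma mxBE' (m p : nat) (M N : 'M[R]_(m, p)) i j : (M - N) i j = M i j - N i j.
Proof. by rewrite !mxE. Qed.

Lemma mxZE' (m p : nat) a (M : 'M[R]_(m, p)) i j : (a *: M) i j = a * M i j.
Proof. by rewrite !mxE. Qed.

Lemma mxDE' (m p : nat) (M N : 'M[R]_(m, p)) i j : (M + N) i j = M i j + N i j.
Proof. by rewrite !mxE. Qed.

Lemma bilMB A B x y : bil (A - B) x y = bil A x y - bil B x y.
Proof. by rewrite /bil -sumrB; apply: eq_bigr => k _; rewrite mulmxBl mxBE' mulrBr. Qed.

Lemma bilMZ a A x y : bil (a *: A) x y = a * bil A x y.
Proof. by rewrite /bil mulr_sumr; apply: eq_bigr => k _; rewrite -scalemxAl mxZE' mulrCA. Qed.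

Definition ev (k : 'I_n) : 'cV[R]_n := \col_l ((l == k)%:R).

Lemma bil_evl A k y : bil A (ev k) y = (A *m y) k 0.
Proof.
rewrite /bil (bigD1 k) //= big1 ?addr0; first by rewrite mxE eqxx mul1r.
by move=> l /negbTE hl; rewrite mxE hl mul0r.
Qed.

Lemma mulmx_ev A k l : (A *m ev k) l 0 = A l k.
Proof.
rewrite mxE (bigD1 k) //= big1 ?addr0; first by rewrite mxE eqxx mulr1.
by move=> m /negbTE hm; rewrite mxE hm mulr0.
Qed.

Definition copo A := forall x, nonneg_vec x -> 0 <= bil A x x.

Lemma grad_ge0 {A u} k : A^T = A -> copo A -> nonneg_vec u -> bil A u u = 0 ->
  0 <= (A *m u) k 0.
Proof.
move=> hA hc hu hq; rewrite leNgt; apply/negP => ha.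
have [t ht htd] : exists2 t : R, 0 < t & t * (`|A k k| + 1) = - (A *m u) k 0.
  exists (- (A *m u) k 0 / (`|A k k| + 1)).
    by rewrite divr_gt0 // ?oppr_gt0 // ltr_pwDr.
  by rewrite mulfVK // gt_eqF // ltr_pwDr.
have hx : nonneg_vec (u + t *: ev k).
  move=> l; rewrite !mxE; apply: addr_ge0; first exact: hu.
  by apply: mulr_ge0; [exact: ltW | rewrite ler0n].
have := hc _ hx.
rewrite !bilDl !bilDr !bilZl !bilZr hq (bilC A u (ev k) hA) bil_evl.
rewrite bil_evl mulmx_ev.
have h1 : t * A k k <= t * `|A k k| by apply: ler_wpM2l; [exact: ltW | exact: ler_norm].
have h2 : t * `|A k k| < - (A *m u) k 0 by rewrite -htd mulrDr mulr1 ltrDl.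
clear htd hx; move: h1 h2 ha ht; move: (A *m u) k 0 (A k k) `|A k k| => a c d.
move=> h1 h2 ha ht; nra.
Qed.

Lemma grad_eq0 {A u} k : A^T = A -> copo A -> nonneg_vec u -> bil A u u = 0 ->
  u k 0 != 0 -> (A *m u) k 0 = 0.
Proof.
move=> hA hc hu hq hk.
have h0 : forall l, 0 <= u l 0 * (A *m u) l 0.
  by move=> l; apply: mulr_ge0; [exact: hu | exact: grad_ge0].
have := hq; rewrite /bil => /eqP; rewrite psumr_eq0; last by move=> l _; exact: h0.
move=> /allP /(_ k (mem_index_enum k)) /implyP /(_ isT) /eqP.
by move/eqP; rewrite mulf_eq0 (negbTE hk) /= => /eqP.
Qed.


Lemma fin_argmin (I : finType) (P : pred I) (F : I -> R) k1 :
  P k1 -> exists2 k0, P k0 & forall k, P k -> F k0 <= F k.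
Proof.
move=> hk; case: (@Order.TotalTheory.arg_minP _ _ I k1 P F hk) => k0 h0 hmin.
by exists k0.
Qed.

Lemma exitP x (d : 'cV[R]_n) : (forall k, d k 0 < 0 -> 0 < x k 0) -> nonneg_vec x ->
  (exists k, d k 0 < 0) ->
  exists t : R, exists k0, [/\ 0 < t, d k0 0 < 0, x k0 0 + t * d k0 0 = 0 &
                          nonneg_vec (x + t *: d)].
Proof.
move=> hpos hx [k1 hk1].
have [k0 hk0 hmin] := @fin_argmin _ (fun k => d k 0 < 0) (fun k => x k 0 / - d k 0) k1 hk1.
exists (x k0 0 / - d k0 0), k0; split => //.
- by rewrite divr_gt0 ?oppr_gt0 // hpos.
- by rewrite invrN mulrN mulNr divfK ?subrr // ltr0_neq0.
move=> k; rewrite !mxE; case: (ltrP (d k 0) 0) => hd.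
  have := hmin k hd; rewrite ler_pdivlMr ?oppr_gt0 // mulrN => h.
  lra.
apply: addr_ge0; first exact: hx.
by apply: mulr_ge0 => //; apply: divr_ge0; [exact: hx | rewrite oppr_ge0 ltW].
Qed.

Lemma vec_neq0 x : x != 0 -> exists k, x k 0 != 0.
Proof.
move=> hx; case: (classic (exists k, x k 0 != 0)) => // hne; exfalso.
move/negP: hx; apply; apply/eqP/matrixP => a b; rewrite (ord1 b) mxE.
by case: (eqVneq (x a 0) 0) => // hne'; exfalso; apply: hne; exists a.
Qed.

Lemma in_supp x k : (k \in supp x) = (x k 0 != 0).
Proof. by rewrite /supp inE. Qed.

Definition goodz A (i j : 'I_n) u := is_zero_of A u /\ (A *m u) i 0 = 0 /\
  (A *m u) j 0 = 0 /\ 0 < u i 0 + u j 0.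

Lemma bil_zero_cross A u v : A^T = A -> copo A -> nonneg_vec u -> bil A u u = 0 ->
  (forall k, v k 0 != 0 -> u k 0 != 0) -> bil A v u = 0.
Proof.
move=> hA hc hu hq hvu; rewrite /bil big1 // => k _.
case: (eqVneq (v k 0) 0) => [->|hk]; first by rewrite mul0r.
by rewrite (grad_eq0 k hA hc hu hq (hvu k hk)) mulr0.
Qed.

Lemma mulmx_subE A u v t k : (A *m (u - t *: v)) k 0 = (A *m u) k 0 - t * (A *m v) k 0.
Proof. by rewrite mulmxBr -scalemxAr mxBE' mxZE'. Qed.

Lemma to_minimal A i j u : A^T = A -> copo A -> goodz A i j u ->
  exists v, is_minimal_zero A v /\ (A *m v) i 0 = 0 /\ (A *m v) j 0 = 0 /\
            0 < v i 0 + v j 0.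
Proof.
move=> hA hc; have [m] := ubnP #|supp u|; elim: m u => // m IH u hm.
move=> [[hu0 [hun hq]] [hi [hj hij]]].
case: (classic (exists v, is_zero_of A v /\ supp v \proper supp u)); last first.
  by move=> hno; exists u; split => //; split => //.
move=> [v [[hv0 [hvn hvq]] hpr]].
rewrite qformE in hq; rewrite qformE in hvq.
have hvu : forall k, v k 0 != 0 -> u k 0 != 0.
  move=> k; rewrite -!in_supp; apply/subsetP; case/properP: hpr.
  by move=> h _.
have [t [k0 [ht hk0 hz hwn]]] : exists t, exists k0, [/\ 0 < t, (- v) k0 0 < 0,
    u k0 0 + t * (- v) k0 0 = 0 & nonneg_vec (u + t *: - v)].
  apply: exitP => //.
    move=> k; rewrite mxE oppr_lt0 => hk.
    by rewrite lt0r hun hvu // gt_eqF.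
  have [k hk] := vec_neq0 v hv0; exists k; rewrite mxE oppr_lt0 lt0r hk.
  exact: hvn.
rewrite scalerN in hwn; rewrite mxE in hk0 hz.
set w := u - t *: v in hwn.
have hwE : forall k, w k 0 = u k 0 - t * v k 0 by move=> k; rewrite mxBE' mxZE'.
have hvu0 : bil A v u = 0 by apply: bil_zero_cross.
have hwq : bil A w w = 0.
  rewrite /w !bilBl !bilBr !bilZl !bilZr hq hvq (bilC A u v hA) hvu0.
  by rewrite !mulr0 !subr0.
have hAv : forall l, (A *m u) l 0 = 0 -> (A *m v) l 0 = 0 /\ (A *m w) l 0 = 0.
  move=> l hl.
  have g1 := grad_ge0 l hA hc hwn hwq.
  have g2 := grad_ge0 l hA hc hvn hvq.
  rewrite /w mulmx_subE hl in g1 *.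
  have : (A *m v) l 0 <= 0 by nra.
  move=> h; have hv : (A *m v) l 0 = 0 by apply/le_anti/andP; split.
  by rewrite hv mulr0 subr0.
have [hvi hwi] := hAv i hi; have [hvj hwj] := hAv j hj.
have hcard : (#|supp v| < m)%N.
  by rewrite ltnS in hm; apply: leq_trans (proper_card hpr) hm.
case: (ltrP 0 (v i 0 + v j 0)) => hvij.
  by apply: (IH v) => //; split => //; split => //; rewrite qformE.
have hwij : 0 < w i 0 + w j 0 by rewrite !hwE; nra.
have hw0 : w != 0.
  apply/negP => /eqP hw; move: hwij; rewrite hw !mxE; lra.
have hpw : supp w \proper supp u.
  apply/properP; split.
    apply/subsetP => k; rewrite !in_supp hwE; apply: contraNN => /eqP hk.
    have hvk : v k 0 = 0.
      by case: (eqVneq (v k 0) 0) => // hv; have := hvu k hv; rewrite hk eqxx.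
    by rewrite hk hvk mulr0 subr0.
  exists k0; rewrite in_supp.
    by apply: hvu; rewrite oppr_lt0 in hk0; rewrite gt_eqF.
  by rewrite hwE negbK; apply/eqP; rewrite -hz; ring.
apply: (IH w) => //.
  by rewrite ltnS in hm; apply: leq_trans (proper_card hpw) hm.
by split => //; split => //; rewrite qformE.
Qed.


Section EFacts.
Variables (i j : 'I_n).
Local Notation E := (Eij R i j).

Lemma Eij_sym : E^T = E.
Proof.
apply/matrixP => k l; rewrite !mxE; congr (_%:R).
by rewrite orbC (andbC (l == j)) (andbC (l == i)).
Qed.

Lemma Eij_ge0 k l : 0 <= E k l.
Proof. by rewrite mxE ler0n. Qed.

Lemma Eij_ij : E i j = 1.
Proof. by rewrite mxE !eqxx. Qed.

Lemma Eij_ji : E j i = 1.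
Proof. by rewrite mxE !eqxx orbT. Qed.

Lemma Eij_nz k l : E k l != 0 -> ((k == i) && (l == j)) || ((k == j) && (l == i)).
Proof. by rewrite mxE; case: (_ || _) => //=; rewrite eqxx. Qed.

Lemma Eu_ge k l u : nonneg_vec u -> E k l * u l 0 <= (E *m u) k 0.
Proof.
move=> hu; rewrite [X in _ <= X]mxE (bigD1 l) //= lerDl; apply: sumr_ge0 => m _.
by apply: mulr_ge0; [exact: Eij_ge0 | exact: hu].
Qed.

Lemma Eu_ge0 k u : nonneg_vec u -> 0 <= (E *m u) k 0.
Proof.
move=> hu; rewrite mxE; apply: sumr_ge0 => m _.
by apply: mulr_ge0; [exact: Eij_ge0 | exact: hu].
Qed.

End EFacts.

Lemma copoP A : copositive A -> A^T = A /\ copo A.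
Proof. by move=> [hA hc]; split => // x hx; rewrite -qformE; apply: hc. Qed.

Lemma back_dir A i j u : copositive A -> is_zero_of A u -> (A *m u) i 0 = 0 ->
  (A *m u) j 0 = 0 -> 0 < u i 0 + u j 0 -> irreducible_wrt A (Eij R i j).
Proof.
move=> hAc [hu0 [hun hq]] hi hj hij [g [hg hBc]].
have [hA hc] := copoP _ hAc.
have [hB hcB] := copoP _ hBc.
rewrite qformE in hq.
have hE : 0 <= bil (Eij R i j) u u.
  by apply: sumr_ge0 => k _; apply: mulr_ge0; [exact: hun | exact: Eu_ge0].
have hqB : bil (A - g *: Eij R i j) u u = 0.
  apply/le_anti/andP; split; last exact: hcB.
  rewrite bilMB bilMZ hq; nra.
have gi := grad_ge0 i hB hcB hun hqB.
have gj := grad_ge0 j hB hcB hun hqB.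
rewrite mulmxBl -scalemxAl mxBE' mxZE' in gi.
rewrite mulmxBl -scalemxAl mxBE' mxZE' in gj.
rewrite hi in gi; rewrite hj in gj.
have e1 := Eu_ge i j i j u hun; have e2 := Eu_ge i j j i u hun.
rewrite Eij_ij in e1; rewrite Eij_ji in e2.
nra.
Qed.


Definition NS (S : {set 'I_n}) (B : 'M[R]_n) : 'M[R]_n :=
  \matrix_(k, l) (if k \in S then B k l else (k == l)%:R).
Definition cS (S : {set 'I_n}) : 'cV[R]_n := \col_k (if k \in S then -1 else 0).

Lemma NS_mulE S B y k : (NS S B *m y) k 0 = if k \in S then (B *m y) k 0 else y k 0.
Proof.
rewrite mxE; case: ifP => hk.
  by rewrite mxE; apply: eq_bigr => l _; rewrite mxE hk.
under eq_bigr do rewrite mxE hk.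
rewrite (bigD1 k) //= eqxx mul1r big1 ?addr0 // => l hl.
by rewrite eq_sym (negbTE hl) mul0r.
Qed.

Lemma NS_sol S B y : NS S B *m y = cS S ->
  (forall k, k \notin S -> y k 0 = 0) /\ (forall k, k \in S -> (B *m y) k 0 = -1).
Proof.
move=> h; split => k hk; have := congr1 (fun M : 'cV[R]_n => M k 0) h; rewrite NS_mulE !mxE.
  by rewrite (negbTE hk).
by rewrite hk.
Qed.

Lemma sum_neg (d : 'cV[R]_n) : \sum_k d k 0 = 0 -> d != 0 -> exists k, d k 0 < 0.
Proof.
move=> hs hd; case: (classic (exists k, d k 0 < 0)) => // h; exfalso.
have hge : forall k, 0 <= d k 0.
  by move=> k; rewrite leNgt; apply/negP => hk; apply: h; exists k.
move/negP: hd; apply; apply/eqP/matrixP => a b; rewrite (ord1 b) mxE.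
move/eqP: hs; rewrite psumr_eq0; last by move=> k _; exact: hge.
by move=> /allP /(_ a (mem_index_enum a)) /eqP.
Qed.

Lemma bil_supp B v w (S : {set 'I_n}) (c : R) : (forall k, k \notin S -> v k 0 = 0) ->
  (forall k, k \in S -> (B *m w) k 0 = c) -> bil B v w = c * \sum_k v k 0.
Proof.
move=> hv hw; rewrite /bil mulr_sumr; apply: eq_bigr => k _.
case: (boolP (k \in S)) => hk; first by rewrite hw // mulrC.
by rewrite hv // mul0r mulr0.
Qed.

Lemma bil_line B x (d : 'cV[R]_n) (t : R) : B^T = B ->
  bil B (x + t *: d) (x + t *: d) = bil B x x + 2 * t * bil B x d + t * t * bil B d d.
Proof.
move=> hB; rewrite bilDl !bilDr !bilZl !bilZr (bilC B d x hB); ring.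
Qed.

Lemma bil0 B : bil B 0 0 = 0.
Proof. by rewrite /bil big1 // => k _; rewrite mxE mul0r. Qed.

Lemma sum_entries_B x z (c : R) : \sum_k (x - c *: z) k 0 = (\sum_k x k 0) - c * (\sum_k z k 0).
Proof.
rewrite mulr_sumr -sumrB; apply: eq_bigr => k _; by rewrite mxBE' mxZE'.
Qed.

Lemma proper_exit x (e : 'cV[R]_n) (t : R) k0 : (forall k, k \notin supp x -> e k 0 = 0) ->
  x k0 0 != 0 -> (x + t *: e) k0 0 = 0 -> supp (x + t *: e) \proper supp x.
Proof.
move=> he hx0 hz; apply/properP; split.
  apply/subsetP => k; rewrite !in_supp; apply: contraNN => /eqP hk.
  have : k \notin supp x by rewrite in_supp hk eqxx.
  by move/he; rewrite mxDE' mxZE' hk => ->; rewrite mulr0 addr0.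
by exists k0; rewrite in_supp // hz eqxx.
Qed.

Lemma det0_ker (M : 'M[R]_n) : \det M = 0 -> exists z : 'cV[R]_n, z != 0 /\ M *m z = 0.
Proof.
move=> hd.
have hnf : ~~ row_free M^T by rewrite row_free_unit unitmxE unitfE det_tr hd eqxx.
rewrite -kermx_eq0 in hnf.
have [r hr] : exists r, row r (kermx M^T) != 0.
  case: (classic (exists r, row r (kermx M^T) != 0)) => // h; exfalso.
  move/negP: hnf; apply; apply/eqP/row_matrixP => r; rewrite row0.
  by case: (eqVneq (row r (kermx M^T)) 0) => // hne; exfalso; apply: h; exists r.
exists (row r (kermx M^T))^T; split.
  by apply: contraNneq hr => h; rewrite -[row _ _]trmxK h trmx0.
by rewrite -{1}(trmxK M) -trmx_mul -row_mul mulmx_ker row0 trmx0.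
Qed.

Lemma sum_pos x : nonneg_vec x -> x != 0 -> 0 < \sum_k x k 0.
Proof.
move=> hx hx0; have [k hk] := vec_neq0 x hx0.
rewrite (bigD1 k) //=; apply: ltr_pwDl.
  by rewrite lt0r hk; exact: hx.
by apply: sumr_ge0 => l _; exact: hx.
Qed.

Lemma arith_fin (a b t : R) : 0 <= b + 2 * t * - a + t * t * a -> 0 <= a -> b < 0 ->
  0 < t -> t < 1 -> False.
Proof. move=> g h1 h2 h3 h4; have h5 : 0 <= t * a by apply: mulr_ge0 => //; apply: ltW. nra. Qed.

Arguments exitP {x d}.
Arguments proper_exit {x e t k0}.
Arguments bil_supp {B v w S c}.
Arguments NS_sol {S B y}.
Arguments det0_ker {M}.

Lemma crit B x : B^T = B -> nonneg_vec x -> bil B x x < 0 ->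
  exists S, exists y, [/\ nonneg_vec y, y != 0, NS S B *m y = cS S & \det (NS S B) != 0].
Proof.
move=> hB; have [m] := ubnP #|supp x|; elim: m x => // m IH x hm hx hneg.
case: (classic (exists x', [/\ nonneg_vec x', bil B x' x' < 0 & supp x' \proper supp x])).
  move=> [x' [hx' hn' hpr]]; apply: (IH x') => //.
  by rewrite ltnS in hm; apply: leq_trans (proper_card hpr) hm.
move=> hmin.
have hmin' : forall p, nonneg_vec p -> supp p \proper supp x -> 0 <= bil B p p.
  move=> p hp hpr; rewrite leNgt; apply/negP => h; apply: hmin; by exists p; split.
set S := supp x.
have hxS : forall k, k \notin S -> x k 0 = 0.
  by move=> k; rewrite in_supp negbK => /eqP.
have hxpos : forall k, k \in S -> 0 < x k 0.
  by move=> k; rewrite in_supp => hk; rewrite lt0r hk; exact: hx.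
have hx0 : x != 0.
  by apply: contraTneq hneg => ->; rewrite bil0 ltxx.
have cond : forall e : 'cV[R]_n, (forall k, k \notin S -> e k 0 = 0) ->
    forall k, e k 0 < 0 -> 0 < x k 0.
  move=> e he k hk; apply: hxpos; apply: contraLR hk => /he ->; by rewrite ltxx.
have inS : forall (e : 'cV[R]_n) k, (forall k, k \notin S -> e k 0 = 0) -> e k 0 < 0 ->
    x k 0 != 0.
  by move=> e k he hk; rewrite gt_eqF // (cond e he).
have step1 : forall d : 'cV[R]_n, (forall k, k \notin S -> d k 0 = 0) -> \sum_k d k 0 = 0 ->
    d != 0 -> 0 < bil B d d.
  move=> d hdS hds hd0; rewrite ltNge; apply/negP => hdd.
  have [k2 hk2] := sum_neg d hds hd0.
  have hdS' : forall k, k \notin S -> (- d) k 0 = 0.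
    by move=> k hk; rewrite mxE hdS // oppr0.
  have [k1 hk1] : exists k, (- d) k 0 < 0.
    apply: sum_neg; last by rewrite oppr_eq0.
    rewrite (eq_bigr (fun k => - d k 0)); last by move=> k _; rewrite mxE.
    by rewrite sumrN hds oppr0.
  have [t2 [k02 [ht2 hd02 hz2 hp2]]] := exitP (cond d hdS) hx (ex_intro _ k2 hk2).
  have [t1 [k01 [ht1 hd01 hz1 hp1]]] := exitP (cond (- d) hdS') hx (ex_intro _ k1 hk1).
  have hz2' : (x + t2 *: d) k02 0 = 0 by rewrite mxDE' mxZE'.
  have hz1' : (x + t1 *: - d) k01 0 = 0 by rewrite mxDE' mxZE'.
  have g2 := hmin' _ hp2 (proper_exit hdS (inS d k02 hdS hd02) hz2').
  have g1 := hmin' _ hp1 (proper_exit hdS' (inS (- d) k01 hdS' hd01) hz1').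
  rewrite bil_line // in g2; rewrite bil_line // bilNr bilNl bilNr opprK in g1.
  move: (bil B x x) (bil B x d) (bil B d d) hneg hdd g1 g2 => q b c hq hc g1 g2.
  have e : 0 <= t1 * (q + 2 * t2 * b + t2 * t2 * c) + t2 * (q + 2 * t1 * - b + t1 * t1 * c).
    by apply: addr_ge0; apply: mulr_ge0 => //; apply: ltW.
  have e' : t1 * (q + 2 * t2 * b + t2 * t2 * c) + t2 * (q + 2 * t1 * - b + t1 * t1 * c)
      = (t1 + t2) * (q + t1 * t2 * c) by ring.
  rewrite e' pmulr_rge0 ?addr_gt0 // in e.
  have : t1 * t2 * c <= 0 by apply: mulr_ge0_le0 => //; apply: mulr_ge0; apply: ltW.
  lra.
have hdet : \det (NS S B) != 0.
  apply/negP => /eqP hd; have [z [hz0 hz]] := det0_ker hd.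
  have hzS : forall k, k \notin S -> z k 0 = 0.
    by move=> k hk; have := congr1 (fun M : 'cV[R]_n => M k 0) hz; rewrite NS_mulE !mxE (negbTE hk).
  have hBz : forall k, k \in S -> (B *m z) k 0 = 0.
    by move=> k hk; have := congr1 (fun M : 'cV[R]_n => M k 0) hz; rewrite NS_mulE !mxE hk.
  have hzz : bil B z z = 0 by rewrite (bil_supp hzS hBz) mul0r.
  have hxz : bil B x z = 0 by rewrite (bil_supp hxS hBz) mul0r.
  case: (eqVneq (\sum_k z k 0) 0) => hs.
    by have := step1 z hzS hs hz0; rewrite hzz ltxx.
  set c := (\sum_k x k 0) / (\sum_k z k 0).
  set w := x - c *: z.
  have hwS : forall k, k \notin S -> w k 0 = 0.
    by move=> k hk; rewrite mxBE' mxZE' hxS // hzS // mulr0 subr0.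
  have hws : \sum_k w k 0 = 0 by rewrite sum_entries_B /c (divfK hs) subrr.
  have hww : bil B w w = bil B x x.
    rewrite /w !bilBl !bilBr !bilZl !bilZr hzz (bilC B z x hB) hxz; ring.
  have hw0 : w != 0 by apply: contraTneq hneg => h; rewrite -hww h bil0 ltxx.
  by have := step1 w hwS hws hw0; rewrite hww ltNge (ltW hneg).
have hunit : NS S B \in unitmx by rewrite unitmxE unitfE.
set y := invmx (NS S B) *m cS S.
have hy : NS S B *m y = cS S by rewrite /y mulKVmx.
have [hyS hBy] := NS_sol hy.
set tau := \sum_k x k 0.
have htau : 0 < tau by apply: sum_pos.
have [k0 hk0] := vec_neq0 x hx0.
have hk0S : k0 \in S by rewrite in_supp.
have hy0 : y != 0.
  apply/negP => /eqP hy0'; have := hBy k0 hk0S; rewrite hy0' mulmx0 mxE => /eqP.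
  by rewrite eq_sym oppr_eq0 oner_eq0.
set sig := \sum_k y k 0.
have hyy : bil B y y = -1 * sig by rewrite (bil_supp hyS hBy).
have hsig0 : sig != 0.
  apply/negP => /eqP hs; have := step1 y hyS hs hy0.
  by rewrite hyy hs mulr0 ltxx.
set y' := (tau / sig) *: y.
set d := x - y'.
have hdS : forall k, k \notin S -> d k 0 = 0.
  by move=> k hk; rewrite mxBE' mxZE' hxS // hyS // mulr0 subr0.
have hds : \sum_k d k 0 = 0 by rewrite sum_entries_B -/sig divfK // subrr.
have hdy : bil B d y' = 0 by rewrite bilZr (bil_supp hdS hBy) hds !mulr0.
have hdd : 0 <= bil B d d.
  case: (eqVneq d 0) => [->|hd0]; first by rewrite bil0.
  by apply: ltW; apply: step1.
have hxd : x = y' + d by rewrite /d addrC subrK.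
have hxx : bil B x x = (tau / sig) * (tau / sig) * (-1 * sig) + bil B d d.
  rewrite {1 2}hxd (bilDl B y' d) (bilDr B y' y' d) (bilDr B d y' d) (bilC B y' d hB) hdy /y' bilZl bilZr hyy; ring.
have hsig : 0 < sig.
  rewrite hxx in hneg; move: hneg hdd; move: (tau / sig) (bil B d d) => a b h1 h2.
  have ha2 : 0 <= a * a by rewrite -expr2 sqr_ge0.
  nra.
have hxd2 : bil B x d = bil B d d.
  by rewrite {1}hxd (bilDl B y' d) (bilC B y' d hB) hdy add0r.
exists S, y; split => //.
move=> k; rewrite leNgt; apply/negP => hyk.
have hy'k : y' k 0 < 0 by rewrite mxZE' pmulr_rlt0 // divr_gt0.
have hdS' : forall k, k \notin S -> (- d) k 0 = 0.
  by move=> l hl; rewrite mxE hdS // oppr0.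
have hdk : (- d) k 0 < 0.
  by rewrite mxE mxBE' opprB subr_lt0; apply: lt_le_trans hy'k _; exact: hx.
have [t [k1 [ht hk1 hz1 hp1]]] := exitP (cond (- d) hdS') hx (ex_intro _ k hdk).
have ht1 : t < 1.
  have := hp1 k; rewrite mxDE' mxZE' mxE mxBE' opprB => h.
  have hxk := hx k.
  nra.
have hz1' : (x + t *: - d) k1 0 = 0 by rewrite mxDE' mxZE'.
have g := hmin' _ hp1 (proper_exit hdS' (inS (- d) k1 hdS' hk1) hz1').
rewrite bil_line // bilNr bilNl bilNr opprK hxd2 in g.
exact: (arith_fin _ _ _ g hdd hneg ht ht1).
Qed.


Definition Gs A (i j : 'I_n) (S : {set 'I_n}) (g : R) :=
  0 < g /\ exists y, [/\ nonneg_vec y, y != 0,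
     NS S (A - g *: Eij R i j) *m y = cS S & \det (NS S (A - g *: Eij R i j)) != 0].

Definition NX A (i j : 'I_n) (S : {set 'I_n}) : 'M[{poly R}]_n :=
  \matrix_(k, l) (if k \in S then (A k l)%:P - 'X * (Eij R i j k l)%:P
                  else ((k == l)%:R)%:P).

Definition cX (S : {set 'I_n}) : 'cV[{poly R}]_n := map_mx polyC (cS S).

Lemma NX_eval A i j S g :
  map_mx (horner_eval g) (NX A i j S) = NS S (A - g *: Eij R i j).
Proof.
apply/matrixP => k l; rewrite !mxE horner_evalE; case: ifP => _.
  by rewrite hornerD hornerN hornerM hornerX !hornerC.
by rewrite hornerC.
Qed.

Lemma cX_eval S g : map_mx (horner_eval g) (cX S) = cS S.
Proof. by apply/matrixP => k l; rewrite !mxE horner_evalE hornerC. Qed.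

Section Glue.
Variables (A : 'M[R]_n) (i j : 'I_n) (S : {set 'I_n}).
Local Notation E := (Eij R i j).
Local Notation N := (NX A i j S).
Let D := \det N.
Let P2 := D *: (\adj N *m cX S).
Let pk k := P2 k 0.
Let D2 := D * D.

Lemma NX_id : N *m P2 = D2 *: cX S.
Proof. by rewrite /P2 -scalemxAr mulmxA mul_mx_adj mul_scalar_mx scalerA. Qed.

Lemma mulmx_entryP (M : 'M[{poly R}]_n) (v : 'cV[{poly R}]_n) k :
  (M *m v) k 0 = \sum_l M k l * v l 0.
Proof. by rewrite mxE. Qed.

Lemma NX_entry k l : N k l = if k \in S then (A k l)%:P - 'X * (E k l)%:P
                             else ((k == l)%:R)%:P.
Proof. by rewrite mxE. Qed.

Lemma rhs_entry k : (D2 *: cX S) k 0 = if k \in S then - D2 else 0.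
Proof. by rewrite !mxE; case: ifP => _; rewrite ?polyCN ?polyC1 ?mulrN1 ?mulr0. Qed.

Lemma pk_out k : k \notin S -> pk k = 0.
Proof.
move=> hk; have := congr1 (fun M : 'cV[{poly R}]_n => M k 0) NX_id.
rewrite mulmx_entryP rhs_entry (negbTE hk) => <-.
rewrite (bigD1 k) //= NX_entry (negbTE hk) eqxx polyC1 mul1r big1 ?addr0 //.
by move=> l hl; rewrite NX_entry (negbTE hk) eq_sym (negbTE hl) polyC0 mul0r.
Qed.

Definition hrow k := \sum_l (E k l)%:P * pk l.

Lemma pk_row k : k \in S ->
  \sum_l (A k l)%:P * pk l = 'X * hrow k - D2.
Proof.
move=> hk; have := congr1 (fun M : 'cV[{poly R}]_n => M k 0) NX_id.
rewrite mulmx_entryP rhs_entry hk.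
under eq_bigr do rewrite NX_entry hk mulrBl.
rewrite sumrB => h.
have -> : \sum_l (A k l)%:P * pk l = \sum_l 'X * (E k l)%:P * P2 l 0 - D2.
  by rewrite -h /pk; ring.
by rewrite /hrow mulr_sumr; congr (_ - _); apply: eq_bigr => l _; rewrite mulrA.
Qed.

Definition gq := \sum_k pk k * hrow k.

Lemma Rq_id : \sum_k pk k * \sum_l (A k l)%:P * pk l = 'X * gq - D2 * \sum_k pk k.
Proof.
rewrite /gq !mulr_sumr -sumrB; apply: eq_bigr => k _.
case: (boolP (k \in S)) => hk.
  by rewrite pk_row //; ring.
by rewrite pk_out // !mul0r !mulr0 subr0.
Qed.

Lemma gq_low m : (forall k, vanish (pk k) m) -> vanish gq (m + m).
Proof.
move=> hv c hc; rewrite /gq coef_sum big1 // => k _.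
have hh : vanish (hrow k) m.
  move=> a ha; rewrite /hrow coef_sum big1 // => l _; by rewrite coefCM hv // mulr0.
by have [h _] := prod_low (hv k) hh; apply: h.
Qed.

Lemma map_entry (f : {poly R} -> R) (M : 'cV[{poly R}]_n) k :
  (map_mx f M) k 0 = f (M k 0).
Proof. by rewrite mxE. Qed.

Lemma eval_pk g y : NS S (A - g *: E) *m y = cS S ->
  forall k, (pk k).[g] = \det (NS S (A - g *: E)) * (\det (NS S (A - g *: E)) * y k 0).
Proof.
move=> hy k.
have h1 : map_mx (horner_eval g) P2 = \det (NS S (A - g *: E)) *: (\adj (NS S (A - g *: E)) *m cS S).
  by rewrite /P2 map_mxZ map_mxM map_mx_adj NX_eval cX_eval /D -det_map_mx NX_eval.
rewrite -hy mulmxA mul_adj_mx mul_scalar_mx scalerA in h1.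
have h2 := congr1 (fun M : 'cV[R]_n => M k 0) h1; simpl in h2.
rewrite map_entry horner_evalE mxZE' in h2.
by rewrite /pk h2 mulrA.
Qed.

Lemma eval_D g : D.[g] = \det (NS S (A - g *: E)).
Proof. by rewrite -horner_evalE /D -det_map_mx NX_eval. Qed.

Lemma poly_part : A^T = A -> copo A ->
  (forall d, 0 < d -> exists g, [/\ 0 < g, g < d & Gs A i j S g]) ->
  exists w, goodz A i j w.
Proof.
move=> hA hc hs.
have hpk : forall g k, Gs A i j S g -> 0 <= (pk k).[g].
  move=> g k [hg [y [hy hy0 hNy hdet]]]; rewrite (eval_pk _ _ hNy) mulrA.
  by apply: mulr_ge0; [rewrite -expr2 sqr_ge0 | exact: hy].
have hD2 : forall g, Gs A i j S g -> 0 < D2.[g].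
  move=> g [hg [y [hy hy0 hNy hdet]]]; rewrite hornerM eval_D.
  by rewrite lt0r mulf_neq0 //= -expr2 sqr_ge0.
have hQ : forall g, Gs A i j S g -> 0 < (\sum_k pk k).[g].
  move=> g hG; have hG' := hG; move: hG' => [hg [y [hy hy0 hNy hdet]]].
  rewrite horner_sum; under eq_bigr do rewrite (eval_pk _ _ hNy) mulrA.
  rewrite -mulr_sumr; apply: mulr_gt0.
    by have := hD2 g hG; rewrite hornerM eval_D.
  exact: sum_pos.
have hvq : forall g, Gs A i j S g -> nonneg_vec (\col_k (pk k).[g]).
  by move=> g hG k; rewrite mxE; apply: hpk.
have hR : forall g, Gs A i j S g -> 0 <= ('X * gq - D2 * \sum_k pk k).[g].
  move=> g hG; rewrite -Rq_id.
  have := hc _ (hvq g hG); rewrite /bil => h.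
  apply: le_trans h _; rewrite le_eqVlt; apply/orP; left; apply/eqP.
  rewrite horner_sum; apply: eq_bigr => k _.
  rewrite hornerM horner_sum !mxE; congr (_ * _); apply: eq_bigr => l _.
  by rewrite hornerM hornerC mxE.
have [m [hv hge hQm hDlow]] := @coef_main _ _ pk D2 gq _ hs hpk (fun g hG => ltW (hD2 g hG)) hQ hR gq_low.
set w := \col_k (pk k)`_m.
have hwS : forall k, k \notin S -> w k 0 = 0 by move=> k hk; rewrite mxE pk_out // coef0.
have hwn : nonneg_vec w by move=> k; rewrite mxE.
have hws : \sum_k w k 0 = (\sum_k pk k)`_m by rewrite coef_sum; apply: eq_bigr => k _; rewrite mxE.
have hw0 : w != 0.
  apply/negP => /eqP hw; move: hQm; rewrite -hws hw.
  by rewrite big1 ?ltxx // => k _; rewrite mxE.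
have hAw : forall k, k \in S -> (A *m w) k 0 = 0.
  move=> k hk; have := congr1 (fun p : {poly R} => p`_m) (pk_row _ hk).
  rewrite coef_sum coefB coefXM (hDlow m (leqnn m)) subr0.
  have -> : (if m == 0%N then 0 else (hrow k)`_m.-1) = 0.
    case: eqP => // hm0; rewrite /hrow coef_sum big1 // => l _.
    by rewrite coefCM hv ?mulr0 // prednK // lt0n; apply/eqP.
  move=> h; rewrite mxE; transitivity (\sum_l ((A k l)%:P * pk l)`_m); last exact: h.
  apply: eq_bigr => l _.
  by rewrite coefCM mxE.
have hww : bil A w w = 0 by rewrite (bil_supp hwS hAw) mul0r.
have [g0 [hg0 _ hG0]] := hs 1 ltr01.
have hG0' := hG0; move: hG0' => [_ [y [hy hy0 hNy hdet]]].
set v := \col_k (pk k).[g0].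
have hvS : forall k, k \notin S -> v k 0 = 0 by move=> k hk; rewrite mxE pk_out // horner0.
have hrowv : forall k, k \in S -> (A *m v) k 0 = g0 * (E *m v) k 0 - D2.[g0].
  move=> k hk; have := congr1 (fun p : {poly R} => p.[g0]) (pk_row _ hk).
  rewrite horner_sum hornerD hornerN hornerM hornerX /hrow horner_sum => h.
  transitivity (\sum_l ((A k l)%:P * pk l).[g0]).
    by rewrite mxE; apply: eq_bigr => l _; rewrite hornerM hornerC !mxE.
  rewrite h; congr (_ * _ - _).
  by rewrite mxE; apply: eq_bigr => l _; rewrite hornerM hornerC !mxE.
have hwv : bil A w v = 0.
  by rewrite (bilC A w v hA) (bil_supp hvS hAw) mul0r.
have hkey : g0 * \sum_k w k 0 * (E *m v) k 0 = D2.[g0] * \sum_k w k 0.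
  move: hwv; rewrite /bil.
  have -> : \sum_k w k 0 * (A *m v) k 0 = \sum_k (g0 * (w k 0 * (E *m v) k 0) - D2.[g0] * w k 0).
    apply: eq_bigr => k _; case: (boolP (k \in S)) => hk.
      by rewrite hrowv //; ring.
    by rewrite hwS // !mul0r !mulr0 subr0.
  rewrite sumrB -!mulr_sumr => /eqP; rewrite subr_eq0 => /eqP ->; by [].
have hpos : 0 < D2.[g0] * \sum_k w k 0 by apply: mulr_gt0; [exact: hD2 | rewrite hws].
have [k hk] : exists k, w k 0 * (E *m v) k 0 != 0.
  case: (classic (exists k, w k 0 * (E *m v) k 0 != 0)) => // h; exfalso.
  move: hpos; rewrite -hkey big1 ?mulr0 ?ltxx // => k _.
  by case: (eqVneq (w k 0 * (E *m v) k 0) 0) => // hne; exfalso; apply: h; exists k.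
move: hk; rewrite mulf_eq0 negb_or => /andP [hwk hEk].
have [l hl] : exists l, E k l * v l 0 != 0.
  case: (classic (exists l, E k l * v l 0 != 0)) => // h; exfalso.
  move/negP: hEk; apply; rewrite mxE; apply/eqP; apply: big1 => l _.
  by case: (eqVneq (E k l * v l 0) 0) => // hne; exfalso; apply: h; exists l.
move: hl; rewrite mulf_eq0 negb_or => /andP [hEkl hvl].
have hkS : k \in S by apply: contraNT hwk => /hwS ->.
have hlS : l \in S by apply: contraNT hvl => /hvS ->.
have hwpos : 0 < w k 0 by rewrite lt0r hwk hwn.
exists w; split; first by split => //; split => //; rewrite qformE.
have hwi := hwn i; have hwj := hwn j.
case/orP: (Eij_nz i j k l hEkl) => /andP [/eqP hki /eqP hlj]; subst k l.
  by rewrite !hAw //; split => //; split => //; lra.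
by rewrite !hAw //; split => //; split => //; lra.
Qed.

End Glue.

Lemma fin_small (T : finType) (G : T -> R -> Prop) :
  (forall g, 0 < g -> exists S, G S g) ->
  exists S, forall d, 0 < d -> exists g, [/\ 0 < g, g < d & G S g].
Proof.
move=> h; case: (classic (exists S, forall d, 0 < d -> exists g, [/\ 0 < g, g < d & G S g])) => //.
move=> hno; exfalso.
have hd : forall S, exists2 d, 0 < d & forall g, 0 < g -> g < d -> ~ G S g.
  move=> S; case: (classic (exists2 d, 0 < d & forall g, 0 < g -> g < d -> ~ G S g)) => // h2.
  exfalso; apply: hno; exists S => d hd0.
  case: (classic (exists g, [/\ 0 < g, g < d & G S g])) => // h3; exfalso.
  by apply: h2; exists d => // g hg hgd hG; apply: h3; exists g.
have hall : forall s : seq T, exists2 d, 0 < d &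
    forall S, S \in s -> forall g, 0 < g -> g < d -> ~ G S g.
  elim => [|S s [d1 hd1 h1]]; first by exists 1.
  have [d2 hd2 h2] := hd S.
  exists (Num.min d1 d2); first by rewrite lt_min hd1 hd2.
  move=> S'; rewrite in_cons => /orP [/eqP -> | hS'] g hg; rewrite lt_min => /andP [g1 g2].
    by apply: h2.
  by apply: h1.
have [d hd0 hdd] := hall (enum T).
have hd2 : 0 < d / 2 by rewrite divr_gt0.
have [S hS] := h _ hd2.
apply: (hdd S _ (d / 2)) => //; first by rewrite mem_enum.
by rewrite ltr_pdivrMr // ltr_pMr // ltr1n.
Qed.

Lemma forward A i j : copositive A -> irreducible_wrt A (Eij R i j) ->
  exists w, goodz A i j w.
Proof.
move=> hAc hirr; have [hA hc] := copoP _ hAc.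
have hsym : forall g, (A - g *: Eij R i j)^T = A - g *: Eij R i j.
  by move=> g; rewrite linearB linearZ /= hA Eij_sym.
have hneg : forall g, 0 < g -> exists x, nonneg_vec x /\ bil (A - g *: Eij R i j) x x < 0.
  move=> g hg; case: (classic (exists x, nonneg_vec x /\ bil (A - g *: Eij R i j) x x < 0)) => // h.
  exfalso; apply: hirr; exists g; split => //; split; first exact: hsym.
  move=> x hx; rewrite qformE leNgt; apply/negP => hlt; apply: h; by exists x; split.
have hS : forall g, 0 < g -> exists S, Gs A i j S g.
  move=> g hg; have [x [hx hlt]] := hneg g hg.
  have [S [y [hy hy0 hNy hdet]]] := crit _ _ (hsym g) hx hlt.
  by exists S; split => //; exists y; split.
have [S hsm] := @fin_small _ _ hS.
exact: (poly_part A i j S hA hc hsm).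
Qed.

End Basics.

Theorem lemma4p1 (R : realFieldType) (n : nat) (A : 'M[R]_n) (i j : 'I_n) :
  copositive A ->
  (irreducible_wrt A (Eij R i j) <->
   exists u : 'cV[R]_n,
     is_minimal_zero A u /\ (A *m u) i 0 = 0 /\ (A *m u) j 0 = 0 /\ 0 < u i 0 + u j 0).
Proof.
move=> hAc; split.
  move=> hirr; have [hA hc] := @copoP _ _ A hAc.
  have [w hw] := @forward _ _ A i j hAc hirr.
  exact: (@to_minimal _ _ A i j w hA hc hw).
move=> [u [[hz _] [hi [hj hij]]]].
exact: (@back_dir _ _ A i j u hAc hz hi hj hij).
Qed.
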